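(* Let $\|\cdot\|$ be a norm on $\mathbb{R}^n$ which is $C^1$ (away from the origin) and strictly convex, and let $\mathsf{d}(x,y)=\|x-y\|$. Then $(\mathbb{R}^n,\mathsf{d})$ is locally-uniformly non-branching.
   Context: $\mathrm{Geo}(\mathsf{X},\mathsf{d})$ is the set of constant-speed length-minimising curves $\gamma:[0,1]\to\mathsf{X}$. A metric space $(\mathsf{X},\mathsf{d})$ is locally-uniformly non-branching if it is Polish and for every $x,y,z\in\mathsf{X}$ with $y\ne z$ and $\mathsf{d}(x,y)=\mathsf{d}(x,z)$ there exist $r>0$ and $\rho>0$ such that for all $x'\in B_r(x)$, $y'\in B_r(y)$, $z'\in B_r(z)$ there is $\gamma\in\mathrm{Geo}(\mathsf{X},\mathsf{d})$ with $\gamma(0)=x'$, $\gamma(1)=y'$ and $\liminf_{t\downarrow0}\frac{\mathsf{d}(\gamma(t),z')-\mathsf{d}(x',z')}{t}\ge-(1-\rho)\,\mathsf{d}(x',y')$. *)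

(* Defs.v *)
From HB Require Import structures.
From mathcomp Require Import all_boot all_order all_algebra.
From mathcomp Require Import all_classical all_reals all_analysis.
Set Implicit Arguments. Unset Strict Implicit. Unset Printing Implicit Defensive.
Import Order.TTheory GRing.Theory Num.Theory.
Import numFieldNormedType.Exports.
Local Open Scope classical_set_scope.
Local Open Scope ring_scope.

Section Defs.
Variable R : realType.

Definition metric_complete (X : Type) (d : X -> X -> R) : Prop :=
  forall u : nat -> X,
    (forall e : R, 0 < e -> exists N : nat, forall m k : nat,
        (N <= m)%N -> (N <= k)%N -> d (u m) (u k) < e) ->
    exists l : X, forall e : R, 0 < e -> exists N : nat, forall m : nat,
        (N <= m)%N -> d (u m) l < e.

Definition metric_separable (X : Type) (d : X -> X -> R) : Prop :=
  exists S : set X, countable S /\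
    forall (x : X) (e : R), 0 < e -> exists2 s, S s & d x s < e.

Definition polish (X : Type) (d : X -> X -> R) : Prop :=
  metric_complete d /\ metric_separable d.

(* Geo(X,d): constant-speed length-minimising curves [0,1] -> X
   (a curve is represented by a function R -> X; only its values on
   [0,1] matter). *)
Definition is_geodesic (X : Type) (d : X -> X -> R) (g : R -> X) : Prop :=
  forall s t : R, 0 <= s <= 1 -> 0 <= t <= 1 ->
    d (g s) (g t) = `|s - t| * d (g 0) (g 1).

Definition liminf_right0_ge (f : R -> R) (c : R) : Prop :=
  forall e : R, 0 < e -> \forall t \near 0^'+, c - e <= f t.

Definition locally_uniformly_non_branching (X : Type) (d : X -> X -> R) : Prop :=
  polish d /\
  forall x y z : X, y <> z -> d x y = d x z ->
    exists r : R, exists rho : R, 0 < r /\ 0 < rho /\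
      forall x' y' z' : X, d x x' < r -> d y y' < r -> d z z' < r ->
        exists g : R -> X, is_geodesic d g /\ g 0 = x' /\ g 1 = y' /\
          liminf_right0_ge (fun t => (d (g t) z' - d x' z') / t)
                           (- ((1 - rho) * d x' y')).

Definition is_norm (n : nat) (N : 'rV[R]_n -> R) : Prop :=
  (forall x, N x = 0 -> x = 0) /\
  (forall (a : R) x, N (a *: x) = `|a| * N x) /\
  (forall x y, N (x + y) <= N x + N y).

Definition strictly_convex_norm (n : nat) (N : 'rV[R]_n -> R) : Prop :=
  forall (x y : 'rV[R]_n) (t : R), N x = 1 -> N y = 1 -> x <> y ->
    0 < t < 1 -> N (t *: x + (1 - t) *: y) < 1.

(* C^1 away from the origin: differentiable at every x <> 0, with
   derivative continuous on R^n \ {0} (tested on every direction v,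
   which in finite dimension is continuity of x |-> dN(x)). *)
Definition C1_away_from_origin (n : nat) (N : 'rV[R]_n -> R) : Prop :=
  (forall x : 'rV[R]_n, x != 0 -> differentiable N x) /\
  (forall x v : 'rV[R]_n, x != 0 -> {for x, continuous (fun y => 'd N y v)}).

End Defs.

(* Main.v *)
Require Import Defs.
From HB Require Import structures.
From mathcomp Require Import all_boot all_order all_algebra.
From mathcomp Require Import all_classical all_reals all_analysis.
Import Order.TTheory GRing.Theory Num.Theory.
Import numFieldNormedType.Exports.
Local Open Scope classical_set_scope.
Local Open Scope ring_scope.

Lemma N0 {R : realType} {n} {N : 'rV[R]_n -> R} : is_norm N -> N 0 = 0.
Proof. by case=> _ [hZ _]; rewrite -(scale0r 0) hZ normr0 mul0r. Qed.

Lemma NN {R : realType} {n} {N : 'rV[R]_n -> R} : is_norm N -> forall x, N (- x) = N x.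
Proof. by case=> _ [hZ _] x; rewrite -scaleN1r hZ normrN normr1 mul1r. Qed.

Lemma Nge0 {R : realType} {n} {N : 'rV[R]_n -> R} : is_norm N -> forall x, 0 <= N x.
Proof.
move=> hN x; have := hN.2.2 x (- x); rewrite subrr (N0 hN) (NN hN) -mulr2n.
by rewrite pmulrn_lge0.
Qed.

Lemma NB {R : realType} {n} {N : 'rV[R]_n -> R} : is_norm N -> forall x y, N (x - y) = N (y - x).
Proof. by move=> hN x y; rewrite -(NN hN) opprB. Qed.

Lemma NZp {R : realType} {n} {N : 'rV[R]_n -> R} : is_norm N -> forall a x, 0 <= a -> N (a *: x) = a * N x.
Proof. by move=> hN a x ha; rewrite hN.2.1 ger0_norm. Qed.

Lemma Ntri {R : realType} {n} {N : 'rV[R]_n -> R} : is_norm N -> forall x y, N (x + y) <= N x + N y.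
Proof. by case=> _ []. Qed.

Lemma Nrev {R : realType} {n} {N : 'rV[R]_n -> R} : is_norm N -> forall x y, N x - N y <= N (x - y).
Proof.
move=> hN x y; rewrite lerBlDr; have := Ntri hN (x - y) y; by rewrite subrK.
Qed.

Lemma coord_le {R : realType} {m n} (A : 'M[R]_(m, n)) i j : `|A i j| <= `|A|.
Proof.
have /mapP[k Hk ->] : `|A i j| \in [seq `|A x.1 x.2| | x : 'I_m * 'I_n].
  by apply/mapP; exists (i, j) => //=; rewrite mem_enum.
by rewrite [leRHS]/Num.norm /= mx_normrE; apply/bigmax_geP; right => /=; exists k.
Qed.

Lemma Nupper {R : realType} {n} {N : 'rV[R]_n -> R} : is_norm N ->
  exists2 C, 0 < C & forall v, N v <= C * `|v|.
Proof.
move=> hN; exists (1 + \sum_(j < n) N 'e_j); first by rewrite ltr_pwDl ?sumr_ge0 // => j _; exact: Nge0.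
move=> v; rewrite [v in N v]row_sum_delta.
apply: (le_trans (y := \sum_(j < n) `|v| * N 'e_j)).
  elim/big_ind2: _ => //.
  - by rewrite (N0 hN).
  - by move=> a b c d hab hcd; apply: le_trans (Ntri hN _ _) (lerD hab hcd).
  move=> j _; rewrite hN.2.1 ler_wpM2r ?Nge0 //.
  exact: coord_le.
by rewrite -mulr_sumr mulrC ler_wpM2r // ?ler_wpDl //.
Qed.

Lemma Ncont {R : realType} {n} {N : 'rV[R]_n -> R} : is_norm N -> continuous N.
Proof.
move=> hN x; have [C C0 HC] := Nupper hN.
have FF : ProperFilter (nbhs x) by apply: nbhs_pfilter.
apply/cvgrPdist_lt => e e0.
near=> y.
have hy : `|x - y| < e / C.
  by near: y; apply: (@cvgr_dist_lt _ _ _ _ _ id x (cvg_id (F := nbhs x))); rewrite divr_gt0.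
apply: (le_lt_trans (y := N (x - y))).
  rewrite ler_norml; apply/andP; split; last exact: Nrev.
  by rewrite lerNl opprB NB //; apply: Nrev.
apply: le_lt_trans (HC _) _.
by rewrite -ltr_pdivlMl // mulrC.
Unshelve. all: by end_near.
Qed.

Lemma Nlower {R : realType} {n} {N : 'rV[R]_n -> R} : is_norm N ->
  exists2 c, 0 < c & forall v, c * `|v| <= N v.
Proof.
move=> hN.
pose S := [set v : 'rV[R]_n | `|v| = 1].
have [[v0 Sv0]|S0] := pselect (S !=set0); last first.
  exists 1 => // v; rewrite mul1r.
  have [->|vn0] := eqVneq v 0; first by rewrite normr0 Nge0.
  exfalso; apply: S0; exists (`|v|^-1 *: v); rewrite /S /= normrZ normrV ?unitfE ?normr_eq0 //.
  by rewrite normr_id mulVf // normr_eq0.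
have cS : compact S.
  apply: bounded_closed_compact.
    exists 1; split => // M M1 x Sx /=; rewrite Sx; exact: ltW.
  have := (continuous_closedP (Num.norm : 'rV[R]_n -> R)).1 (@norm_continuous _ _) _ (@closed_eq R 1).
  by [].

have [c0 Sc0 Hmin] := EVT_min_rV (@ex_intro _ _ v0 Sv0) cS (continuous_subspaceT (Ncont hN)).
rewrite inE in Sc0.
have m0 : 0 < N c0.
  rewrite lt_neqAle Nge0 // andbT; apply/eqP => /esym /hN.1 c00.
  by move: Sc0; rewrite /S /= c00 normr0 => /eqP; rewrite eq_sym oner_eq0.
exists (N c0) => // v.
have [->|vn0] := eqVneq v 0; first by rewrite normr0 mulr0 Nge0.
have nv0 : 0 < `|v| by rewrite normr_gt0.
have Su : `| `|v|^-1 *: v| = 1.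
  by rewrite normrZ normrV ?unitfE ?gt_eqF // normr_id mulVf ?gt_eqF.
have Nv : N v = `|v| * N (`|v|^-1 *: v).
  by rewrite -NZp ?ltW // scalerA mulfV ?gt_eqF // scale1r.
rewrite Nv mulrC ler_pM2l //.
by apply: Hmin; rewrite inE.
Qed.

Lemma Ncomplete {R : realType} {n} {N : 'rV[R]_n -> R} : is_norm N ->
  metric_complete (fun x y : 'rV[R]_n => N (x - y)).
Proof.
move=> hN u hu.
have [c c0 Hc] := Nlower hN; have [C C0 HC] := Nupper hN.
have cu : cauchy (u @ \oo).
  apply: cauchy_exP => eps eps0.
  have [K HK] := hu (c * eps) (mulr_gt0 c0 eps0).
  exists (u K); exists K => // m /= Km.
  rewrite -ball_normE /=.
  rewrite -(ltr_pM2l c0); apply: le_lt_trans (Hc _) _; exact: HK.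
have [l ul] := (cvg_ex _).1 (cauchy_cvg _ cu).
exists l => e e0.
have := cvgr_dist_lt _ _ ul _ (divr_gt0 e0 C0).
case=> K _ HK; exists K => m Km.
apply: le_lt_trans (HC _) _.
rewrite -ltr_pdivlMl // mulrC -normrN opprB.
exact: HK.
Qed.

Lemma norm_lt_coord {R : realType} {m n} (A : 'M[R]_(m, n)) d :
  0 < d -> (forall i j, `|A i j| < d) -> `|A| < d.
Proof.
move=> d0 H; rewrite /Num.norm /= mx_normrE; apply/bigmax_ltP; split => // [[i j]] _.
Qed.

Lemma Nseparable {R : realType} {n} {N : 'rV[R]_n -> R} : is_norm N ->
  metric_separable (fun x y : 'rV[R]_n => N (x - y)).
Proof.
move=> hN; have [C C0 HC] := Nupper hN.
exists (range (fun q : 'rV[rat]_n => map_mx (@ratr R) q)); split.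
  exact: (sub_countable (card_image_le _ setT) (countableP _)).
move=> x e e0.
have d0 : 0 < e / C by rewrite divr_gt0.
have : forall j : 'I_n, exists q : rat, ratr q \in `](x 0 j - e / C), (x 0 j + e / C)[.
  move=> j; apply: rat_in_itvoo; rewrite ltrBlDr -addrA ltrDl.
  by rewrite addr_gt0.
case/choice => f Hf.
exists (map_mx ratr (\row_j f j)); first by exists (\row_j f j).
apply: le_lt_trans (HC _) _.
rewrite -ltr_pdivlMl // mulrC.
apply: norm_lt_coord => // i j.
rewrite !mxE (ord1 i).
have := Hf j; rewrite in_itv /= => /andP [h1 h2].
rewrite ltr_norml; apply/andP; split.
  by rewrite ltrNl opprB ltrBlDr addrC.
by rewrite ltrBlDr addrC -ltrBlDr.
Qed.

Lemma Dlim {R : realType} {n} {N : 'rV[R]_n -> R} (w u : 'rV[R]_n) :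
  differentiable N w ->
  (fun h : R => (N (w + h *: u) - N w) / h) @ 0^'+ --> 'd N w u.
Proof.
move=> dN.
have := diff_derivable (v := u) dN; rewrite /derivable => /cvg_ex [l hl].
have el : l = 'd N w u.
  by rewrite -deriveE // /derive (cvg_lim _ hl).
rewrite -el.
have -> : (fun h : R => (N (w + h *: u) - N w) / h) =
   (fun h => h^-1 *: ((N \o shift w) (h *: u) - N w)).
  by apply: funext => h /=; rewrite [h *: u + w]addrC mulrC.
move=> A /hl /nbhs_ballP [e e0 H]; exists e => // y /H + /gt_eqF/negbT; exact.
Qed.

Lemma lim_le_right {R : realType} (f : R -> R) l a :
  f @ 0^'+ --> l -> (\forall h \near 0^'+, f h <= a) -> l <= a.
Proof.
move=> fl H; rewrite -(cvg_lim _ fl) //; apply: limr_le => //.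
exact: cvgP fl.
Qed.

Lemma lim_ge_right {R : realType} (f : R -> R) l a :
  f @ 0^'+ --> l -> (\forall h \near 0^'+, a <= f h) -> a <= l.
Proof.
move=> fl H; rewrite -(cvg_lim _ fl) //; apply: limr_ge => //.
exact: cvgP fl.
Qed.

Lemma dN_le {R : realType} {n} {N : 'rV[R]_n -> R} (w u : 'rV[R]_n) :
  is_norm N -> differentiable N w -> 'd N w u <= N u.
Proof.
move=> hN dN; apply: lim_le_right (Dlim w u dN) _.
near=> h.
have h0 : 0 < h by near: h; exact: nbhs_right_gt.
rewrite ler_pdivrMr // mulrC -(NZp hN _ _ (ltW h0)) lerBlDl.
exact: Ntri.
Unshelve. all: by end_near.
Qed.

Lemma dN_ge {R : realType} {n} {N : 'rV[R]_n -> R} (w u : 'rV[R]_n) :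
  is_norm N -> differentiable N w -> - N u <= 'd N w u.
Proof.
move=> hN dN; rewrite lerNl -linearN -(NN hN u); exact: dN_le.
Qed.

Lemma dN_self {R : realType} {n} {N : 'rV[R]_n -> R} (w : 'rV[R]_n) :
  is_norm N -> differentiable N w -> N w <= 'd N w w.
Proof.
move=> hN dN; apply: lim_ge_right (Dlim w w dN) _.
near=> h.
have h0 : 0 < h by near: h; exact: nbhs_right_gt.
have -> : w + h *: w = (1 + h) *: w by rewrite scalerDl scale1r.
rewrite (NZp hN _ _ (ltW (addr_gt0 ltr01 h0))) [(1 + h) * _]mulrDl mul1r addrAC subrr add0r.
by rewrite mulrC mulrA mulVf ?gt_eqF // mul1r.
Unshelve. all: by end_near.
Qed.

From mathcomp Require Import ring lra.

Lemma key {R : realType} {n} {N : 'rV[R]_n -> R} (x y z : 'rV[R]_n) :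
  is_norm N -> strictly_convex_norm N -> differentiable N (x - z) -> y <> z ->
  N (x - y) = N (x - z) -> 0 < N (x - z) ->
  0 < 'd N (x - z) (y - x) + N (y - x).
Proof.
move=> hN hS dN yz Dxy D0.
rewrite ltNge; apply/negP => Hle.
set D := N (x - z) in Dxy D0.
set phi := 'd N (x - z).
have h1 : D <= phi (x - y).
  have -> : phi (x - y) = - phi (y - x) by rewrite -linearN opprB.
  rewrite -Dxy (NB hN); lra.
have h2 : D <= phi (x - z) by exact: dN_self.
pose m2 := (x - y) + (x - z).
have h3 : phi m2 <= N m2 by exact: dN_le.
have h4 : phi m2 = phi (x - y) + phi (x - z) by rewrite linearD.
have Na : N (D^-1 *: (x - y)) = 1 by rewrite hN.2.1 Dxy ger0_norm ?invr_ge0 ?ltW // mulVf ?gt_eqF.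
have Nb : N (D^-1 *: (x - z)) = 1 by rewrite hN.2.1 ger0_norm ?invr_ge0 ?ltW // mulVf ?gt_eqF.
have ab : D^-1 *: (x - y) <> D^-1 *: (x - z).
  move=> /(congr1 (fun v => D *: v)); rewrite !scalerA mulfV ?gt_eqF // !scale1r.
  by move=> /addrI /oppr_inj.
have half : 0 < (2^-1 : R) < 1 by apply/andP; split; lra.
have := hS _ _ _ Na Nb ab half.
have -> : 2^-1 *: (D^-1 *: (x - y)) + (1 - 2^-1) *: (D^-1 *: (x - z)) = (2^-1 * D^-1) *: m2.
  have -> : (1 - 2^-1 : R) = 2^-1 by field.
  by rewrite !scalerA -scalerDr.
rewrite hN.2.1 ger0_norm; last by rewrite mulr_ge0 // invr_ge0 ?ltW.
have : 2 * D <= N m2 by rewrite h4 in h3; lra.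
move=> hm hlt.
have : 2^-1 * D^-1 * (2 * D) <= 2^-1 * D^-1 * N m2.
  by rewrite ler_wpM2l // mulr_ge0 // invr_ge0 ltW.
have -> : 2^-1 * D^-1 * (2 * D) = 1 by field; rewrite gt_eqF.
lra.
Qed.
Lemma arith_fin (R : realFieldType) (del D r rho phi pw L Nv e2 P1 P2 rr : R) :
 rho*D = del/2 -> r <= del/16 -> 0 <= rr -> phi = del - D -> phi - del/4 < pw ->
 pw - e2 <= L -> e2 < 2*r -> P1 <= P2 -> P1 = D - 2 * r - del / 2 + 2 * rr ->
 - P2 <= L.
Proof. move=> *; lra. Qed.

Theorem mainTheorem8 (R : realType) (n : nat) (N : 'rV[R]_n -> R) :
  is_norm N -> C1_away_from_origin N -> strictly_convex_norm N ->
  locally_uniformly_non_branching (fun x y : 'rV[R]_n => N (x - y)).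
Proof.
move=> hN [hd hc] hS; split; first by split; [exact: Ncomplete | exact: Nseparable].
move=> x y z yz Dxy.
have D0 : 0 < N (x - z).
  rewrite lt_neqAle Nge0 // andbT; apply/eqP => /esym h0.
  have := h0; rewrite -Dxy => /hN.1 /eqP; rewrite subr_eq0 => /eqP xy.
  move: h0 => /hN.1 /eqP; rewrite subr_eq0 => /eqP xz.
  by apply: yz; rewrite -xy -xz.
have w0nz : x - z != 0.
  by apply/eqP => h; move: D0; rewrite h (N0 hN) ltxx.
have dw0 := hd _ w0nz.
set D := N (x - z) in Dxy D0.
have NyxD : N (y - x) = D by rewrite -(NB hN).
set phi := 'd N (x - z).
have dpos := key x y z hN hS dw0 yz Dxy D0.
set del := phi (y - x) + N (y - x) in dpos.
have dle : del <= 2 * D.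
  by have := dN_le (x - z) (y - x) hN dw0; rewrite /del NyxD -/phi; lra.
have [c c0 Hc] := Nlower hN.
have hcont := hc (x - z) (y - x) w0nz.
have := cvgr_dist_lt _ _ hcont _ (divr_gt0 dpos (ltr0n _ 4)).
move=> /(_ (nbhs_filter _)) /(nbhs_ballP _ _).1 [eta /= eta0 Heta].
pose r := Num.min (Num.min (del / 16) (D / 4)) (c * eta / 2).
pose rho := del / (2 * D).
exists r, rho.
have r0 : 0 < r.
  by rewrite /r !lt_min !divr_gt0 ?mulr_gt0.
have rdel : r <= del / 16 by rewrite /r !ge_min lexx.
have rD : r <= D / 4 by rewrite /r !ge_min lexx orbT.
have rc : r <= c * eta / 2 by rewrite /r ge_min lexx orbT.
have rho0 : 0 < rho by rewrite divr_gt0 // mulr_gt0.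
have rhoD : rho * D = del / 2 by rewrite /rho; field; rewrite gt_eqF.
have rho1 : rho <= 1.
  by rewrite /rho ler_pdivrMr ?mulr_gt0 // mul1r.
split => //; split => // x' y' z' hx hy hz.
pose w := x' - z'; pose v := y' - x'.
have hxs : N (x' - x) < r by rewrite (NB hN).
have hzs : N (z' - z) < r by rewrite (NB hN).
have hys : N (y' - y) < r by rewrite (NB hN).
have hw : N ((x - z) - w) < 2 * r.
  have -> : (x - z) - w = - ((x' - x) - (z' - z)) by apply/rowP => i; rewrite /w !mxE; ring.
  rewrite (NN hN); apply: le_lt_trans (Ntri hN _ _) _; rewrite (NN hN); lra.
have hv : N (v - (y - x)) < 2 * r.
  have -> : v - (y - x) = (y' - y) + - (x' - x) by apply/rowP => i; rewrite /v !mxE; ring.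
  apply: le_lt_trans (Ntri hN _ _) _; rewrite (NN hN); lra.
have hweta : `|(x - z) - w| < eta.
  rewrite -(ltr_pM2l c0); apply: le_lt_trans (Hc _) _; lra.
have Nw : 0 < N w.
  have := Nrev hN (x - z) ((x - z) - w).
  have -> : x - z - (x - z - w) = w by apply/rowP => i; rewrite !mxE; ring.
  rewrite -/D; lra.
have wnz : w != 0 by apply/eqP => h; move: Nw; rewrite h (N0 hN) ltxx.
have dw := hd _ wnz.
have hpw : `|phi (y - x) - 'd N w (y - x)| < del / 4.
  by apply: Heta; rewrite -ball_normE /=; exact: hweta.
have hpw' : phi (y - x) - del / 4 < 'd N w (y - x).
  by move: hpw; rewrite ltr_norml => /andP [_]; rewrite ltrBlDl ltrBlDr addrC.
have hL : 'd N w (y - x) - N (v - (y - x)) <= 'd N w v.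
  have hsplit : 'd N w v = 'd N w (y - x) + 'd N w (v - (y - x)).
    by rewrite -linearD [_ + (v - _)]addrC subrK.
  by rewrite hsplit lerD2l; exact: dN_ge.
have hNv : D - 2 * r <= N v.
  have h1 := Nrev hN (y - x) ((y - x) - v).
  have e : (y - x) - ((y - x) - v) = v by apply/rowP => i; rewrite !mxE; ring.
  rewrite e NyxD (NB hN) in h1.
  by apply: le_trans h1; rewrite lerD2l lerN2 ltW.
have hprod : (1 - rho) * (D - 2 * r) <= (1 - rho) * N v.
  by rewrite ler_wpM2l // subr_ge0.
have hrr : 0 <= r * rho by rewrite mulr_ge0 // ltW.
have hfin : - ((1 - rho) * N (x' - y')) <= 'd N w v.
  rewrite (NB hN) -/v.
  have e1 : (1 - rho) * (D - 2 * r) = D - 2 * r - del / 2 + 2 * (r * rho).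
    by rewrite -rhoD; ring.
  have hphi : phi (y - x) = del - D by rewrite /del NyxD addrK.
  exact: (@arith_fin _ _ _ _ _ _ _ _ _ _ _ _ _ rhoD rdel hrr hphi hpw' hL hv hprod e1).
exists (fun t => x' + t *: v); split.
  move=> s t _ _ /=.
  have -> : x' + s *: v - (x' + t *: v) = (s - t) *: v.
    by rewrite scalerBl opprD addrACA subrr add0r.
  by rewrite scale0r scale1r addr0 opprD addrA subrr add0r (NN hN) hN.2.1.
split; first by rewrite scale0r addr0.
split; first by rewrite scale1r /v addrC subrK.
move=> e e0.
have hlt : 'd N w v - e < 'd N w v by rewrite ltrBlDr ltrDl.
have Hev := @cvgr_ge _ _ _ _ _ ('d N w v) (Dlim w v dw) _ hlt.
near=> t.
have ht : 'd N w v - e <= (N (w + t *: v) - N w) / t by near: t; exact: Hev.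
rewrite /=.
have -> : x' + t *: v - z' = w + t *: v by rewrite /w addrAC.
apply: le_trans ht; rewrite lerD2r; exact: hfin.
Unshelve. all: by end_near.
Qed.
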